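(* Let $\mathcal{X}=(\mathbf{x}_n)_{n=1}^\infty$ be a spreading sequence in a quasi-Banach space $\mathbb{X}$. If $\mathcal{X}$ is linearly dependent, then it is constant.
   Context: For a sequence $(\mathbf{x}_n)$ in $\mathbb{X}$, $\mathcal{N}\subseteq\mathbb{N}$ and an injective $\psi\colon\mathcal{N}\to\mathbb{N}$, $\psi$ is a translation if the assignment $\mathbf{x}_n\mapsto\mathbf{x}_{\psi(n)}$, $n\in\mathcal{N}$, defines a linear map on $\operatorname{span}(\mathbf{x}_n\colon n\in\mathcal{N})$ extending to an isomorphism $T_\psi$ from the closed linear span of $\{\mathbf{x}_n\colon n\in\mathcal{N}\}$ onto the closed linear span of $\{\mathbf{x}_n\colon n\in\psi(\mathcal{N})\}$. The sequence is spreading if every increasing map $\psi\colon\mathbb{N}\to\mathbb{N}$ is a translation. *)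

(* Defs.v *)
From HB Require Import structures.
From mathcomp Require Import all_boot all_order all_algebra.
Set Implicit Arguments. Unset Strict Implicit. Unset Printing Implicit Defensive.
Import Order.TTheory GRing.Theory Num.Theory.
Local Open Scope ring_scope.

(* Scalars: K : numFieldType (covers R and C).  Quasi-norm qn : V -> K
   taking nonnegative (hence real) values. *)

Section QB.
Variables (K : numFieldType) (V : lmodType K).

Definition quasi_norm (qn : V -> K) : Prop :=
  [/\ (forall x, 0 <= qn x),
      (forall x, qn x = 0 -> x = 0),
      (forall (a : K) x, qn (a *: x) = `|a| * qn x) &
      (exists kappa : K, 1 <= kappa /\
         forall x y, qn (x + y) <= kappa * (qn x + qn y))].

Definition qn_cauchy (qn : V -> K) (u : nat -> V) : Prop :=
  forall e : K, 0 < e -> exists N, forall m n, (N <= m)%N -> (N <= n)%N ->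
    qn (u m - u n) < e.

Definition qn_converges (qn : V -> K) (u : nat -> V) (l : V) : Prop :=
  forall e : K, 0 < e -> exists N, forall n, (N <= n)%N -> qn (u n - l) < e.

Definition quasi_banach (qn : V -> K) : Prop :=
  quasi_norm qn /\
  forall u, qn_cauchy qn u -> exists l, qn_converges qn u l.

Definition lspan (X : nat -> V) (S : nat -> Prop) : V -> Prop :=
  fun v => exists (N : nat) (a : nat -> K) (idx : nat -> nat),
    (forall i, (i < N)%N -> S (idx i)) /\
    v = \sum_(i < N) a i *: X (idx i).

Definition closed_lspan (qn : V -> K) (X : nat -> V) (S : nat -> Prop)
  : V -> Prop :=
  fun v => forall e : K, 0 < e -> exists y, lspan X S y /\ qn (v - y) < e.

Definition translation (qn : V -> K) (X : nat -> V) (Nset : nat -> Prop)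
  (psi : nat -> nat) : Prop :=
  (forall m n, Nset m -> Nset n -> psi m = psi n -> m = n) /\
  let A := closed_lspan qn X Nset in
  let B := closed_lspan qn X (fun k => exists n, Nset n /\ psi n = k) in
  exists T : V -> V,
    (forall (a b : K) x y, A x -> A y -> T (a *: x + b *: y) = a *: T x + b *: T y) /\
    (forall n, Nset n -> T (X n) = X (psi n)) /\
    (forall y, B y <-> exists x, A x /\ T x = y) /\
    (exists C : K, 0 < C /\ forall x, A x ->
        qn (T x) <= C * qn x /\ qn x <= C * qn (T x)).

Definition spreading (qn : V -> K) (X : nat -> V) : Prop :=
  forall psi : nat -> nat, (forall m n, (m < n)%N -> (psi m < psi n)%N) ->
    translation qn X (fun _ => True) psi.

Definition linearly_dependent (X : nat -> V) : Prop :=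
  exists (N : nat) (a : nat -> K),
    (exists i, (i < N)%N /\ a i != 0) /\ \sum_(i < N) a i *: X i = 0.

Definition constant_seq (X : nat -> V) : Prop := forall m n, X m = X n.

End QB.

(* Main.v *)
Require Import Defs.
From HB Require Import structures.
From mathcomp Require Import all_boot all_order all_algebra.
From mathcomp Require Import zify.
Set Implicit Arguments. Unset Strict Implicit. Unset Printing Implicit Defensive.
Import Order.TTheory GRing.Theory Num.Theory.
Local Open Scope ring_scope.

Section H.
Variables (K : numFieldType) (V : lmodType K) (qn : V -> K) (X : nat -> V).

Lemma qn0 : quasi_norm qn -> qn 0 = 0.
Proof.
case=> _ _ hs _; have := hs 0 0; rewrite scale0r normr0 mul0r //.
Qed.

Lemma lspan_A (S : nat -> Prop) v : quasi_norm qn -> lspan X S v -> closed_lspan qn X S v.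
Proof.
move=> hq hv e he; exists v; split => //; by rewrite subrr qn0.
Qed.

Lemma lspan_sum (a : nat -> K) (f : nat -> nat) n :
  lspan X (fun _ => True) (\sum_(i < n) a i *: X (f i)).
Proof. by exists n, a, f. Qed.

Lemma lspan_X k : lspan X (fun _ => True) (X k).
Proof.
exists 1%N, (fun _ => 1), (fun _ => k); split => //.
by rewrite big_ord1 scale1r.
Qed.

Lemma T_sum (T : V -> V) (A : V -> Prop) (psi : nat -> nat) :
  (forall (a b : K) x y, A x -> A y -> T (a *: x + b *: y) = a *: T x + b *: T y) ->
  (forall n, T (X n) = X (psi n)) ->
  (forall (a : nat -> K) (f : nat -> nat) n, A (\sum_(i < n) a i *: X (f i))) ->
  (forall k, A (X k)) ->
  forall (a : nat -> K) (f : nat -> nat) n,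
    T (\sum_(i < n) a i *: X (f i)) = \sum_(i < n) a i *: X (psi (f i)).
Proof.
move=> hl hX hA hAX a f; elim=> [|n IH].
  rewrite !big_ord0.
  have := hl 0 0 0 0; rewrite !scale0r addr0 => ->; [by []| |];
  by have := hA a f 0%N; rewrite big_ord0.
rewrite !big_ord_recr /=.
have := hl 1 (a n) _ _ (hA a f n) (hAX (f n)); rewrite scale1r => ->.
by rewrite scale1r IH hX.
Qed.

End H.

Theorem lemma2p2 (K : numFieldType) (V : lmodType K) (qn : V -> K)
  (X : nat -> V) :
  quasi_banach qn -> spreading qn X -> linearly_dependent X -> constant_seq X.
Proof.
move=> [hq _] hsp [N [a [[i0 [i0N ai0]] hrel]]].
have hqn0 := qn0 hq.
have hq' := hq; case: hq' => hpos hdef _ _.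
have Tprop : forall psi, (forall m n, (m < n)%N -> (psi m < psi n)%N) ->
  exists T : V -> V,
   (forall (b : nat -> K) (f : nat -> nat) n,
     T (\sum_(i < n) b i *: X (f i)) = \sum_(i < n) b i *: X (psi (f i))) /\
   (forall n, T (X n) = X (psi n)) /\
   (forall n m, T (X n) = T (X m) -> X n = X m).
  move=> psi hpsi; have [_ [T [hl [hX [_ [C [C0 hC]]]]]]] := hsp psi hpsi.
  exists T; split; last split.
    apply: (@T_sum K V X T (closed_lspan qn X (fun _ => True)) psi) => //.
    - by move=> n; apply: hX.
    - by move=> b f n; apply: lspan_A => //; apply: lspan_sum.
    - by move=> k; apply: lspan_A => //; apply: lspan_X.
    by move=> n; apply: hX.
  move=> n m eT.
  have Ad : closed_lspan qn X (fun _ => True) (X n - X m).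
    apply: lspan_A => //.
    exists 2%N, (fun i => if i == 0%N then 1 else -1), (fun i => if i == 0%N then n else m).
    by split => //; rewrite big_ord_recr big_ord1 /= scale1r scaleN1r.
  have hAn : closed_lspan qn X (fun _ => True) (X n) by apply: lspan_A => //; apply: lspan_X.
  have hAm : closed_lspan qn X (fun _ => True) (X m) by apply: lspan_A => //; apply: lspan_X.
  have := hl 1 (-1) _ _ hAn hAm; rewrite !scale1r !scaleN1r eT subrr => eT0.
  have [_ h2] := hC _ Ad; move: h2.
  rewrite eT0 hqn0 mulr0 => h2.
  apply/eqP; rewrite -subr_eq0; apply/eqP; apply: hdef.
  by apply/eqP; rewrite eq_le h2 hpos.
have exP : exists i, (i < N)%N && (a i != 0) by exists i0; rewrite i0N ai0.
have ubP : forall i, (i < N)%N && (a i != 0) -> (i <= N)%N.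
  by move=> i /andP[h _]; apply: ltnW.
case: (ex_maxnP exP ubP) => j /andP[jN aj] jmax.
pose psi m i := if (i < j)%N then i else (i - j + m)%N.
have psi_inc : forall m, (j <= m)%N -> forall x y, (x < y)%N -> (psi m x < psi m y)%N.
  move=> m jm x y xy; rewrite /psi.
  case: ifP => hx; case: ifP => hy; lia.
pose g m := \sum_(i < N) a i *: X (psi m i).
have g0 : forall m, (j <= m)%N -> g m = 0.
  move=> m jm; have [T [hs [_ _]]] := Tprop _ (psi_inc m jm).
  rewrite /g; have := hs a (fun i => i) N; rewrite hrel => <-.
  by have := hs a (fun i => i) 0%N; rewrite !big_ord0.
have gd : forall m, g m - g j = a j *: (X m - X j).
  move=> m; rewrite /g -sumrB.
  rewrite (eq_bigr (fun i : 'I_N => if (i : nat) == j then a j *: (X m - X j) else 0)).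
    rewrite (bigD1 (Ordinal jN)) //= eqxx big1 ?addr0 //.
    by move=> i /negPf; rewrite -val_eqE /= => ->.
  move=> i _; rewrite /psi.
  case: (ltngtP i j) => hij.
  - by rewrite subrr.
  - 
    have -> : a i = 0.
      apply/eqP; apply: contraTT hij => hai; rewrite -leqNgt.
      by apply: jmax; rewrite ltn_ord hai.
    by rewrite !scale0r subrr.
  - by rewrite -hij subnn add0n scalerBr.
have Xc : forall m, (j <= m)%N -> X m = X j.
  move=> m jm; have := gd m; rewrite !g0 // subrr => /esym /eqP.
  rewrite scaler_eq0 (negPf aj) /= subr_eq0 => /eqP //.
move=> n m.
have sh : forall x y, (x < y)%N -> (x + j < y + j)%N by move=> x y; lia.
have [T [_ [hT hinj]]] := Tprop _ sh.
apply: hinj; rewrite !hT !Xc //; lia.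
Qed.
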